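(* Let $g_1, g_2$ be integers with $g_1 > g_2 \geq 2$, and let $\beta > 0$ be a real number. Let $(a_n)_{n\geq 1}$ be a sequence of positive integers with $a_1 \geq 2$ and $a_{n+1} = a_n^{1+\beta}$ for all $n \geq 1$. Define $$\theta_1 = \sum_{n=1}^{\infty} \frac{1}{g_1^{a_n}}, \qquad \theta_2 = \sum_{n=1}^{\infty} \frac{1}{g_2^{a_n}}.$$ Then each of the real numbers $\theta_1 + \theta_2$, $\theta_1 - \theta_2$, $\theta_1 \theta_2$ and $\theta_1/\theta_2$ is transcendental. *)

(* Defs.v *)
From HB Require Import structures.
From mathcomp Require Import all_boot all_order all_algebra.
From mathcomp Require Import all_classical all_reals all_analysis.
Set Implicit Arguments. Unset Strict Implicit. Unset Printing Implicit Defensive.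
Import Order.TTheory GRing.Theory Num.Theory.
Local Open Scope ring_scope.

Definition algebraic (R : realType) (x : R) : Prop :=
  exists p : {poly rat}, p != 0 /\ root (map_poly (@ratr R) p) x.

Definition transcendental (R : realType) (x : R) : Prop := ~ algebraic x.

(* Main.v *)
Require Import Defs.
From HB Require Import structures.
From mathcomp Require Import all_boot all_order all_algebra.
From mathcomp Require Import all_classical all_reals all_analysis.
From mathcomp Require Import ring lra zify.
Import Order.TTheory GRing.Theory Num.Theory.
Import numFieldNormedType.Exports.
Local Open Scope ring_scope.

Section Liou.
Variable R : realType.

Lemma rat_to_int (P : {poly rat}) : P != 0 -> exists Z : {poly int},
  [/\ Z != 0, size Z = size P & forall y : R,
     ((map_poly ratr P).[y] == 0) = ((map_poly intr Z).[y] == 0)].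
Proof.
move=> P0; have [Z [a a0 EP]] := rat_poly_scale P.
have szZ : size Z = size P.
  by rewrite EP size_scale ?invr_eq0 ?intr_eq0 // size_map_inj_poly //; apply: intr_inj.
exists Z; split => //.
  by rewrite -size_poly_eq0 szZ size_poly_eq0.
move=> y.
have -> : map_poly ratr P = ratr (a%:~R^-1) *: map_poly (intr : int -> R) Z.
  rewrite EP map_polyZ -map_poly_comp; congr (_ *: _).
  by apply: eq_map_poly => z /=; rewrite ratr_int.
by rewrite hornerZ mulf_eq0 fmorph_eq0 invr_eq0 intr_eq0 (negPf a0).
Qed.

Lemma int_poly_lb (Z : {poly int}) (p : int) (q : nat) : (0 < q)%N ->
  (map_poly intr Z).[p%:~R / q%:R] != 0 :> R ->
  1 <= q%:R ^+ size Z * `|(map_poly intr Z).[p%:~R / q%:R] : R|.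
Proof.
move=> q0 nz.
set s := size Z.
have q0R : (q%:R : R) != 0 by rewrite pnatr_eq0 -lt0n.
have E : q%:R ^+ s * (map_poly intr Z).[p%:~R / q%:R] =
   (\sum_(i < s) Z`_i * p ^+ i * (q%:Z) ^+ (s - i))%:~R :> R.
  rewrite (@horner_coef_wide _ s); last by rewrite size_map_inj_poly //; apply: intr_inj.
  rewrite mulr_sumr rmorph_sum; apply: eq_bigr => i _.
  rewrite coef_map /= !rmorphM /= !rmorphXn /=.
  have -> : (q%:R : R) ^+ s = q%:R ^+ i * q%:R ^+ (s - i).
    by rewrite -exprD subnKC // ltnW.
  rewrite exprMn exprVn.
  have qi : (q%:R : R) ^+ i != 0 by rewrite expf_eq0 (negPf q0R) andbF.
  rewrite pmulrn. field.
  by [].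
have m0 : (\sum_(i < s) Z`_i * p ^+ i * (q%:Z) ^+ (s - i)) != 0.
  by rewrite -(intr_eq0 R) -E mulf_eq0 negb_or expf_eq0 (negPf q0R) andbF.
rewrite -(ger0_norm (exprn_ge0 s (ler0n R q))) -normrM E -intr_norm ler1z.
by move: m0; rewrite -normr_gt0 gtz0_ge1.
Qed.


Lemma poly_ub (Zr : {poly R}) (x y : R) : Zr.[x] = 0 -> `|y - x| <= 1 ->
  `|Zr.[y]| <= (\sum_(i < size (Zr \Po ('X + x%:P))) `|(Zr \Po ('X + x%:P))`_i|) * `|y - x|.
Proof.
move=> Zx yx1; set W := Zr \Po ('X + x%:P).
have EW : Zr.[y] = W.[y - x] by rewrite horner_comp hornerD hornerX hornerC subrK.
have W0 : W`_0 = 0 by rewrite -horner_coef0 horner_comp hornerD hornerX hornerC add0r.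
rewrite EW horner_coef mulr_suml; apply: (le_trans (ler_norm_sum _ _ _)).
apply: ler_sum => -[[|i] Hi] _ /=.
  by rewrite W0 mul0r normr0 mul0r.
rewrite normrM normrX exprS mulrCA [X in _ <= X]mulrC ler_wpM2l ?normr_ge0 //.
by rewrite -[X in _ <= X]mulr1 ler_wpM2l ?normr_ge0 // exprn_ile1 ?normr_ge0.
Qed.

Lemma liouville (x : R) :
  (forall k : nat, exists (p : int) (q : nat), [/\ (2 <= q)%N,
     x != p%:~R / q%:R & q%:R ^+ k * `|x - p%:~R / q%:R| <= 1]) ->
  transcendental x.
Proof.
move=> H [PP [PP0 rootPP]].
suff Hs : forall n (P : {poly rat}), (size P <= n)%N -> P != 0 ->
   root (map_poly ratr P) x -> False by exact: (Hs _ PP (leqnn _) PP0 rootPP).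
elim=> [|n IH] P szP P0 rP.
  by move: P0; rewrite -size_poly_eq0; move: szP; rewrite leqn0 => /eqP ->.
have [Z [Z0 szZ EZ]] := rat_to_int P P0.
set Zr := map_poly (intr : int -> R) Z.
have Zx : Zr.[x] = 0 by apply/eqP; rewrite -EZ; exact: rP.
set W := Zr \Po ('X + x%:P).
set C := \sum_(i < size W) `|W`_i|.
have C0 : 0 <= C by rewrite sumr_ge0 // => i _; rewrite normr_ge0.
set K := Num.Def.archi_bound C.
have CK := archi_boundP C0.
have [p [q [q2 xy Hk]]] := H (size Z + K)%N.
set y := p%:~R / q%:R : R.
have q0R : (q%:R : R) != 0 by rewrite pnatr_eq0 -lt0n ltnW.
have qge1 : (1 : R) <= q%:R ^+ (size Z + K) by rewrite exprn_ege1 // ler1n ltnW.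
have yx1 : `|y - x| <= 1.
  by rewrite distrC; apply: le_trans Hk; rewrite ler_peMl ?normr_ge0.
have [Py|Py] := eqVneq (map_poly ratr P).[y] 0.
  set r := p%:~R / q%:R : rat.
  have ry : ratr r = y.
    by rewrite /r fmorph_div rmorph_int rmorph_nat.
  have rootPr : root P r.
    by apply/eqP; move: Py; rewrite -ry horner_map /= => /eqP; rewrite fmorph_eq0 => /eqP.
  have [Q EQ] := factor_theorem _ _ rootPr.
  have Q0 : Q != 0 by apply: contra P0 => /eqP Q0; rewrite EQ Q0 mul0r.
  apply: (IH Q) => //.
    move: szP; rewrite EQ size_mul ?polyXsubC_eq0 // size_XsubC addn2 /=.
    by [].
  move: rP; rewrite /root EQ rmorphM /= map_polyXsubC hornerM hornerXsubC /= ry.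
  by rewrite mulf_eq0 subr_eq0 (negPf xy) orbF.
have Zy : Zr.[y] != 0 by rewrite -EZ.
have lb := int_poly_lb Z p q (ltnW q2) Zy.
have ub := poly_ub Zr x y Zx yx1.
have : (q%:R : R) ^+ K <= C.
  apply: (le_trans (y := q%:R ^+ K * (q%:R ^+ size Z * `|Zr.[y]|))).
    by rewrite ler_peMr ?exprn_ge0 ?ler0n.
  apply: (le_trans (y := q%:R ^+ K * (q%:R ^+ size Z * (C * `|y - x|)))).
    by rewrite ler_wpM2l ?exprn_ge0 ?ler0n // ler_wpM2l ?exprn_ge0 ?ler0n.
  rewrite mulrA -exprD addnC mulrCA distrC -[X in _ <= X]mulr1 ler_wpM2l //.
apply/negP; rewrite -ltNge; apply: (lt_le_trans CK).
apply: (le_trans (y := (2%:R : R) ^+ K)).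
  by rewrite -natrX ler_nat ltnW // ltn_expl.
by rewrite ler_pXn2r ?nnegrE ?ler0n ?ler_nat.
Qed.

End Liou.

Section SerA.
Variable R : realType.

Lemma lim_ge_ev (u : R^nat) (c : R) (n0 : nat) : cvgn u ->
  (forall N, (n0 <= N)%N -> c <= u N) -> c <= limn u.
Proof. by move=> cu H; apply: limr_ge => //; exists n0. Qed.

Lemma lim_le_ev (u : R^nat) (c : R) (n0 : nat) : cvgn u ->
  (forall N, (n0 <= N)%N -> u N <= c) -> limn u <= c.
Proof. by move=> cu H; apply: limr_le => //; exists n0. Qed.

Variable w : nat -> R.
Hypothesis w0 : forall m, 0 <= w m.
Hypothesis w2 : forall m, (1 <= m)%N -> 2 * w m.+1 <= w m.

Let u N := \big[+%R/0%R]_(1 <= m < N) w m.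

Lemma tail_ub n0 N : (1 <= n0)%N -> (n0 <= N)%N ->
  \sum_(n0 <= m < N) w m + 2 * w N <= 2 * w n0.
Proof.
move=> h1; elim: N => [|N IH]; first by rewrite leqn0 => /eqP h; move: h1; rewrite h.
rewrite leq_eqVlt => /orP[/eqP <-|]; first by rewrite big_geq // add0r.
rewrite ltnS => hN; rewrite big_nat_recr //=.
apply: le_trans (IH hN); rewrite -addrA lerD2l.
have := w2 N (leq_trans h1 hN); lra.
Qed.

Lemma u_step N : u N <= u N.+1.
Proof.
rewrite /u; case: N => [|N]; first by rewrite !big_geq.
by rewrite [X in _ <= X]big_nat_recr //= lerDl.
Qed.

Lemma u_cvg : cvgn u.
Proof.
apply: nondecreasing_is_cvgn; first by apply/nondecreasing_seqP; exact: u_step.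
exists (2 * w 1) => _ [N _ <-].
case: N => [|N]; first by rewrite /u big_geq // mulr_ge0 ?w0.
have := tail_ub 1 N.+1 isT isT; have := w0 N.+1; rewrite /u; lra.
Qed.

Lemma tail_bounds n0 : (1 <= n0)%N ->
  w n0 <= limn u - u n0 <= 2 * w n0.
Proof.
move=> h1; apply/andP; split.
  rewrite lerBrDl; apply: (lim_ge_ev _ _ n0.+1) => [|N hN]; first exact: u_cvg.
  rewrite /u [X in _ <= X](@big_cat_nat _ _ _ n0) //= ?(leq_trans _ (ltnW hN)) // addrC.
  rewrite [X in _ <= X]addrC lerD2l big_ltn //= lerDl sumr_ge0 // => *; exact: w0.
rewrite lerBlDl; apply: (lim_le_ev _ _ n0) => [|N hN]; first exact: u_cvg.
rewrite /u (@big_cat_nat _ _ _ n0) //= lerD2l.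
have := tail_ub n0 N h1 hN; have := w0 N; lra.
Qed.

End SerA.

Section SeqA.
Variable R : realType.
Variable beta : R.
Variable a : nat -> nat.
Hypothesis hb : 0 < beta.
Hypothesis ha1 : (2 <= a 1)%N.
Hypothesis hrec : forall n, (1 <= n)%N -> ((a n.+1)%:R : R) = (a n)%:R `^ (1 + beta).

Lemma a_split n : (1 <= n)%N -> ((a n.+1)%:R : R) = (a n)%:R * (a n)%:R `^ beta.
Proof.
move=> n1; rewrite hrec // powRD ?powRr1 ?ler0n //.
have hb1 : 0 < 1 + beta by rewrite addr_gt0.
by rewrite gt_eqF.
Qed.

Lemma a_ge2 n : (1 <= n)%N -> (2 <= a n)%N /\ (a n < a n.+1)%N.
Proof.
elim: n => [//|n IH] _.
have h2 : (2 <= a n.+1)%N.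
  case: n IH => [_|n IH]; first by [].
  by have [h1 h2] := IH isT; apply: leq_trans h2; apply: ltnW.
split => //.
rewrite -(ltr_nat R) (a_split n.+1) //.
rewrite ltr_pMr; last by rewrite ltr0n; apply: leq_trans h2.
have := @gt0_ltr_powR R beta hb 1 (a n.+1)%:R.
rewrite powR1; apply; rewrite ?nnegrE ?ler0n //.
by rewrite ltr1n; apply: leq_trans h2.
Qed.

Lemma a_ge n : (1 <= n)%N -> (n <= a n)%N.
Proof.
elim: n => [//|n IH] _.
case: n IH => [_|n IH]; first by apply: leq_trans ha1.
by have [_ h] := a_ge2 n.+1 isT; apply: leq_ltn_trans h; apply: IH.
Qed.

Lemma a_mono m n : (1 <= m)%N -> (m <= n)%N -> (a m <= a n)%N.
Proof.
move=> m1; elim: n => [|n IH]; first by rewrite leqn0 => /eqP m0; move: m1; rewrite m0.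
rewrite leq_eqVlt => /orP[/eqP -> //|]; rewrite ltnS => mn.
have [_ h] := a_ge2 n (leq_trans m1 mn).
by apply: leq_trans (ltnW h); apply: IH.
Qed.

Lemma a_growth K : exists n, (1 <= n)%N /\ (K * a n <= a n.+1)%N.
Proof.
set T := ((K%:R : R) `^ beta^-1).
have T0 : 0 <= T by rewrite powR_ge0.
set n := (Num.Def.archi_bound T).+1.
exists n; split => //.
have Tn : T <= (a n)%:R.
  apply: (le_trans (ltW (archi_boundP T0))).
  by rewrite ler_nat; apply: leq_trans (a_ge n isT).
rewrite -(ler_nat R) natrM (a_split n) // mulrC ler_wpM2l ?ler0n //.
have := @ge0_ler_powR R beta (ltW hb) T (a n)%:R.
rewrite /T -powRrM mulVf ?gt_eqF // powRr1 ?ler0n //.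
by apply; rewrite ?nnegrE ?ler0n // powR_ge0.
Qed.

End SeqA.

Section SerC.
Variable R : realType.
Variable beta : R.
Variable a : nat -> nat.
Hypothesis hb : 0 < beta.
Hypothesis ha1 : (2 <= a 1)%N.
Hypothesis hrec : forall n, (1 <= n)%N -> ((a n.+1)%:R : R) = (a n)%:R `^ (1 + beta).

Let aG2 := @a_ge2 R beta a hb ha1 hrec.
Let aMono := @a_mono R beta a hb ha1 hrec.
Let aGe := @a_ge R beta a hb ha1 hrec.

Definition th (g : nat) : R := limn (fun N => \big[+%R/0%R]_(1 <= n < N) ((g%:R : R) ^- a n)).
Definition Sg (g n : nat) : R := \sum_(1 <= m < n.+1) (g%:R : R) ^- a m.
Definition Ag (g n : nat) : nat := \sum_(1 <= m < n.+1) g ^ (a n - a m).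

Lemma inv_le2 (x y c : R) : 0 < x -> 0 < y -> c * y <= x -> c * x^-1 <= y^-1.
Proof.
move=> x0 y0 h; rewrite -(ler_pM2r (mulr_gt0 x0 y0)).
have -> : c * x^-1 * (x * y) = c * y by field; rewrite gt_eqF.
by have -> : y^-1 * (x * y) = x by field; rewrite gt_eqF.
Qed.

Variable g : nat.
Hypothesis g2 : (2 <= g)%N.

Let gR0 : 0 < (g%:R : R). Proof. by rewrite ltr0n; apply: leq_trans g2. Qed.

Lemma w_ge0 m : 0 <= (g%:R : R) ^- a m.
Proof. by rewrite invr_ge0 exprn_ge0 // ltW. Qed.

Lemma w_gt0 m : 0 < (g%:R : R) ^- a m.
Proof. by rewrite invr_gt0 exprn_gt0. Qed.

Lemma w_2 m : (1 <= m)%N -> 2 * (g%:R : R) ^- a m.+1 <= (g%:R : R) ^- a m.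
Proof.
move=> m1; apply: inv_le2; rewrite ?exprn_gt0 //.
have [_ h] := aG2 m m1.
rewrite -(@subnKC (a m) (a m.+1)) ?(ltnW h) // exprD mulrC ler_wpM2l ?exprn_ge0 //.
have : (1 <= a m.+1 - a m)%N by rewrite subn_gt0.
case: (a m.+1 - a m)%N => [//|k] _.
rewrite exprS -[X in X <= _]mulr1 ler_pM ?ler0n ?ler_nat // exprn_ege1 // ler1n.
by apply: leq_trans g2.
Qed.

Lemma tailB n : (1 <= n)%N ->
  (g%:R : R) ^- a n.+1 <= th g - Sg g n <= 2 * (g%:R : R) ^- a n.+1.
Proof.
move=> n1; have := @tail_bounds R (fun m => (g%:R : R) ^- a m) w_ge0 w_2 n.+1 isT.
by [].
Qed.


Lemma SgA n : (1 <= n)%N -> Sg g n = (Ag g n)%:R / (g%:R : R) ^+ a n.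
Proof.
move=> n1; apply: (@mulIf _ ((g%:R : R) ^+ a n)); first by rewrite expf_eq0 gt_eqF // andbF.
rewrite divfK ?expf_eq0 ?gt_eqF ?andbF // /Sg /Ag natr_sum mulr_suml.
apply: eq_big_nat => m /andP[m1 mn].
rewrite natrX -(@subnKC (a m) (a n)) ?aMono // exprD mulKf ?expf_eq0 ?gt_eqF ?andbF //.
by rewrite (@subnKC (a m) (a n)) ?aMono.
Qed.

Lemma Sg_ge n : (1 <= n)%N -> (g%:R : R) ^- a 1 <= Sg g n.
Proof.
move=> n1; rewrite /Sg big_ltn // lerDl sumr_ge0 // => *; exact: w_ge0.
Qed.

Lemma Sg_th n : (1 <= n)%N -> Sg g n <= th g.
Proof.
move=> n1; have /andP[h _] := tailB n n1; have := w_ge0 n.+1; lra.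
Qed.

Lemma th_le1 : th g <= 1.
Proof.
have /andP[_ h] := tailB 1 isT.
have E : Sg g 1 = (g%:R : R) ^- a 1 by rewrite /Sg big_nat1.
have h2 := w_2 1 isT.
have h3 : 2 * (g%:R : R) ^- a 1 <= 1.
  rewrite -[X in _ <= X]invr1; apply: inv_le2; rewrite ?exprn_gt0 //.
  rewrite mulr1 -natrX ler_nat; apply: leq_trans (ltnW (ltn_expl _ g2)) _.
  by rewrite leq_exp2l.
move: h; rewrite E; lra.
Qed.

Lemma Ag_bounds n : (1 <= n)%N -> (1 <= Ag g n)%N /\ (Ag g n <= g ^ a n)%N.
Proof.
move=> n1; have E := SgA n n1.
have gp : 0 < (g%:R : R) ^+ a n by rewrite exprn_gt0.
have EA : ((Ag g n)%:R : R) = Sg g n * (g%:R : R) ^+ a n by rewrite E divfK ?gt_eqF.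
split.
  rewrite -(ltr_nat R) EA mulr_gt0 //; apply: lt_le_trans (Sg_ge n n1); exact: w_gt0.
rewrite -(ler_nat R) EA natrX ler_piMl ?(ltW gp) //.
by apply: le_trans (Sg_th n n1) th_le1.
Qed.

End SerC.

Lemma bern (g1 g2 M : nat) : (g2 < g1)%N -> (g2 ^ M * (g2 + M) <= g1 ^ M * g2)%N.
Proof.
move=> h; elim: M => [|M IH]; first by rewrite !expn0 !mul1n addn0.
rewrite !expnS.
set X := (g2 ^ M)%N. set Y := (g1 ^ M)%N.
have key : (g2 * X * (g2 + M.+1) <= g1 * (X * (g2 + M)))%N.
  have : (g2.+1 * (X * (g2 + M)) <= g1 * (X * (g2 + M)))%N by rewrite leq_mul2r h orbT.
  nia.
by apply: leq_trans key _; rewrite -mulnA leq_mul2l IH orbT.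
Qed.

Lemma bern2 (g1 g2 M c : nat) : (g2 < g1)%N -> (1 <= g2)%N -> (c * g2 < M)%N ->
  (c * g2 ^ M < g1 ^ M)%N.
Proof.
move=> h g0 hM; have := bern g1 g2 M h.
have : (c * g2 ^ M * g2 < g2 ^ M * (g2 + M))%N.
  have : (0 < g2 ^ M)%N by rewrite expn_gt0 g0.
  set X := (g2 ^ M)%N; nia.
move=> h1 h2; have := leq_trans h1 h2; rewrite ltn_mul2r g0 /=. done.
Qed.

Lemma expn_mono (m n e : nat) : (m <= n)%N -> (m ^ e <= n ^ e)%N.
Proof. by move=> h; elim: e => [//|e IH]; rewrite !expnS leq_mul. Qed.

Section SerD.
Variable R : realType.
Variable beta : R.
Variable a : nat -> nat.
Hypothesis hb : 0 < beta.
Hypothesis ha1 : (2 <= a 1)%N.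
Hypothesis hrec : forall n, (1 <= n)%N -> ((a n.+1)%:R : R) = (a n)%:R `^ (1 + beta).

Let aG2 := @a_ge2 R beta a hb ha1 hrec.
Let aGrowth := @a_growth R beta a hb ha1 hrec.

Lemma crit (x : R) (g1 g2 : nat) : (2 <= g2)%N ->
  (exists C B : nat, forall n, (1 <= n)%N -> (B <= a n.+1)%N -> exists (p : int) (q : nat),
     [/\ (2 <= q)%N, (q <= (g1 * g2) ^ (a n))%N, x != p%:~R / q%:R &
         `|x - p%:~R / q%:R| <= C%:R * (g2%:R : R) ^- a n.+1]) ->
  transcendental x.
Proof.
move=> g22 [C [B H]]; apply: liouville => k.
set Q := (g1 * g2)%N.
set K := (Q * k + C + B)%N.
have [n [n1 hK]] := aGrowth K.
have [hN _] := aG2 n n1.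
set N := a n in hN hK *; set M := a n.+1 in hK *.
have hB : (B <= M)%N.
  apply: leq_trans hK; apply: leq_trans (_ : K <= K * N)%N; first by rewrite leq_addl.
  by rewrite leq_pmulr // ltnW.
have [p [q [q2 qQ xy hx]]] := H n n1 hB.
exists p, q; split => //.
have g2R : 0 < (g2%:R : R) ^+ M by rewrite exprn_gt0 // ltr0n ltnW.
have nat_b : (q ^ k * C <= g2 ^ M)%N.
  have h1 : (q ^ k <= g2 ^ (Q * (N * k)))%N.
    apply: (@leq_trans ((Q ^ N) ^ k)%N); first exact: expn_mono.
    rewrite -expnM [X in (_ <= X)%N]expnM; apply: expn_mono; apply: ltnW; exact: ltn_expl.
  have h2 : (C <= g2 ^ C)%N by apply: ltnW; exact: ltn_expl.
  apply: leq_trans (leq_mul h1 h2) _; rewrite -expnD; apply: leq_pexp2l; first by apply: ltnW.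
  apply: leq_trans hK; rewrite /K; nia.
apply: le_trans (_ : q%:R ^+ k * (C%:R * (g2%:R : R) ^- M) <= _).
  by rewrite ler_wpM2l ?exprn_ge0 ?ler0n.
rewrite mulrA ler_pdivrMr // mul1r -natrX -natrM -natrX ler_nat //.
Qed.

End SerD.

Lemma inv_lt2 (R : realType) (x y c : R) : 0 < x -> 0 < y -> c * y < x -> c * x^-1 < y^-1.
Proof.
move=> x0 y0 h; rewrite -(ltr_pM2r (mulr_gt0 x0 y0)).
have -> : c * x^-1 * (x * y) = c * y by field; rewrite gt_eqF.
by have -> : y^-1 * (x * y) = x by field; rewrite gt_eqF.
Qed.

Section SerE.
Variable R : realType.
Variable beta : R.
Variable a : nat -> nat.
Hypothesis hb : 0 < beta.
Hypothesis ha1 : (2 <= a 1)%N.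
Hypothesis hrec : forall n, (1 <= n)%N -> ((a n.+1)%:R : R) = (a n)%:R `^ (1 + beta).
Variables g1 g2 : nat.
Hypothesis hg2 : (2 <= g2)%N.
Hypothesis hg : (g2 < g1)%N.

Let hg1 : (2 <= g1)%N. Proof. exact: ltnW (leq_ltn_trans hg2 hg). Qed.
Let aG2 := @a_ge2 R beta a hb ha1 hrec.
Let TB := @tailB R beta a hb ha1 hrec.
Let SA := @SgA R beta a hb ha1 hrec.
Let SGE := @Sg_ge R a.
Let STH := @Sg_th R beta a hb ha1 hrec.
Let TH1 := @th_le1 R beta a hb ha1 hrec.
Let AB := @Ag_bounds R beta a hb ha1 hrec.
Let WGT := @w_gt0 R a.

Let e_le (M : nat) : (g1%:R : R) ^- M <= (g2%:R : R) ^- M.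
Proof.
rewrite -[X in X <= _]mul1r; apply: inv_le2; rewrite ?exprn_gt0 ?ltr0n ?(ltnW hg1) ?(ltnW hg2) //.
by rewrite mul1r -!natrX ler_nat expn_mono // ltnW.
Qed.

Let e_lt (M c : nat) : (c * g2 < M)%N -> c%:R * (g1%:R : R) ^- M < (g2%:R : R) ^- M.
Proof.
move=> hM; apply: inv_lt2; rewrite ?exprn_gt0 ?ltr0n ?(ltnW hg1) ?(ltnW hg2) //.
by rewrite -!natrX -natrM ltr_nat bern2 // ltnW.
Qed.

Lemma case_sum : exists C B : nat, forall n, (1 <= n)%N -> (B <= a n.+1)%N ->
  exists (p : int) (q : nat),
     [/\ (2 <= q)%N, (q <= (g1 * g2) ^ (a n))%N, th R a g1 + th R a g2 != p%:~R / q%:R &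
         `|th R a g1 + th R a g2 - p%:~R / q%:R| <= C%:R * (g2%:R : R) ^- a n.+1].
Proof.
exists 4%N, 0%N => n n1 _.
have [hN _] := aG2 n n1.
exists (Ag a g1 n * g2 ^ a n + Ag a g2 n * g1 ^ a n)%N, ((g1 * g2) ^ a n)%N.
have Ey : ((Ag a g1 n * g2 ^ a n + Ag a g2 n * g1 ^ a n)%N%:~R / ((g1 * g2) ^ a n)%N%:R : R)
    = Sg R a g1 n + Sg R a g2 n.
  rewrite (SA g1 hg1 n n1) (SA g2 hg2 n n1) -pmulrn natrD !natrM !natrX natrM exprMn.
  field.
  by rewrite !expf_eq0 !pnatr_eq0 (gtn_eqF (ltnW hg1)) (gtn_eqF (ltnW hg2)) !andbF.
rewrite Ey.
have /andP[t1l t1u] := TB g1 hg1 n n1.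
have /andP[t2l t2u] := TB g2 hg2 n n1.
have el := e_le (a n.+1).
have w2 := WGT g2 hg2 n.+1.
split.
- apply: leq_trans (_ : g1 * g2 <= _)%N; first by rewrite (leq_trans hg2) // leq_pmull // ltnW.
  have gg : (1 < g1 * g2)%N by nia.
  by rewrite -{1}(expn1 (g1 * g2)) leq_exp2l // ltnW.
- by [].
- apply/eqP => h; have := WGT g1 hg1 n.+1; lra.
- rewrite ler_norml; apply/andP; split; lra.
Qed.


Let q_ge2 n : (1 <= n)%N -> (2 <= (g1 * g2) ^ a n)%N.
Proof.
move=> n1; have [hN _] := aG2 n n1.
apply: leq_trans (_ : g1 * g2 <= _)%N; first by rewrite (leq_trans hg2) // leq_pmull // ltnW.
have gg : (1 < g1 * g2)%N by nia.
by rewrite -{1}(expn1 (g1 * g2)) leq_exp2l // ltnW.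
Qed.

Let nz1 n : (g1%:R : R) ^+ n != 0.
Proof. by rewrite expf_eq0 pnatr_eq0 (gtn_eqF (ltnW hg1)) andbF. Qed.
Let nz2 n : (g2%:R : R) ^+ n != 0.
Proof. by rewrite expf_eq0 pnatr_eq0 (gtn_eqF (ltnW hg2)) andbF. Qed.

Lemma case_diff : exists C B : nat, forall n, (1 <= n)%N -> (B <= a n.+1)%N ->
  exists (p : int) (q : nat),
     [/\ (2 <= q)%N, (q <= (g1 * g2) ^ (a n))%N, th R a g1 - th R a g2 != p%:~R / q%:R &
         `|th R a g1 - th R a g2 - p%:~R / q%:R| <= C%:R * (g2%:R : R) ^- a n.+1].
Proof.
exists 4%N, (2 * g2).+1 => n n1 hB.
exists ((Ag a g1 n * g2 ^ a n)%N%:Z - (Ag a g2 n * g1 ^ a n)%N%:Z), ((g1 * g2) ^ a n)%N.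
have Ey : (((Ag a g1 n * g2 ^ a n)%N%:Z - (Ag a g2 n * g1 ^ a n)%N%:Z)%:~R / ((g1 * g2) ^ a n)%N%:R : R)
    = Sg R a g1 n - Sg R a g2 n.
  rewrite (SA g1 hg1 n n1) (SA g2 hg2 n n1) rmorphB /= -!pmulrn !natrM !natrX natrM exprMn.
  by field; rewrite nz1 nz2.
rewrite Ey.
have /andP[t1l t1u] := TB g1 hg1 n n1.
have /andP[t2l t2u] := TB g2 hg2 n n1.
have el := e_le (a n.+1).
have elt := e_lt (a n.+1) 2 hB.
have w2 := WGT g2 hg2 n.+1.
have w1 := WGT g1 hg1 n.+1.
split => //.
- exact: q_ge2.
- apply/eqP => h; lra.
- rewrite ler_norml; apply/andP; split; lra.
Qed.

Lemma case_prod : exists C B : nat, forall n, (1 <= n)%N -> (B <= a n.+1)%N ->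
  exists (p : int) (q : nat),
     [/\ (2 <= q)%N, (q <= (g1 * g2) ^ (a n))%N, th R a g1 * th R a g2 != p%:~R / q%:R &
         `|th R a g1 * th R a g2 - p%:~R / q%:R| <= C%:R * (g2%:R : R) ^- a n.+1].
Proof.
exists 4%N, 0%N => n n1 _.
exists (Ag a g1 n * Ag a g2 n)%N, ((g1 * g2) ^ a n)%N.
have Ey : ((Ag a g1 n * Ag a g2 n)%N%:~R / ((g1 * g2) ^ a n)%N%:R : R)
    = Sg R a g1 n * Sg R a g2 n.
  rewrite (SA g1 hg1 n n1) (SA g2 hg2 n n1) -pmulrn !natrM !natrX natrM exprMn.
  by field; rewrite nz1 nz2.
rewrite Ey.
have /andP[t1l t1u] := TB g1 hg1 n n1.
have /andP[t2l t2u] := TB g2 hg2 n n1.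
have el := e_le (a n.+1).
have w2 := WGT g2 hg2 n.+1.
have w1 := WGT g1 hg1 n.+1.
have s1 := SGE g1 n n1. have s1' := WGT g1 hg1 1.
have th2 := TH1 g2 hg2. have th1 := TH1 g1 hg1.
have s1t := STH g1 hg1 n n1. have s2t := STH g2 hg2 n n1.
have s2 := SGE g2 n n1. have s2' := WGT g2 hg2 1.
set x1 := th R a g1 in t1l t1u th1 s1t *. set x2 := th R a g2 in t2l t2u th2 s2t *.
set S1 := Sg R a g1 n in t1l t1u s1 s1t *. set S2 := Sg R a g2 n in t2l t2u s2 s2t *.
have E : x1 * x2 - S1 * S2 = (x1 - S1) * x2 + S1 * (x2 - S2) by ring.
have U0 : 0 <= (x1 - S1) * x2 by rewrite mulr_ge0 //; lra.
have U1 : (x1 - S1) * x2 <= x1 - S1 by rewrite ler_piMr //; lra.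
have V0 : 0 < S1 * (x2 - S2) by rewrite mulr_gt0 //; lra.
have V1 : S1 * (x2 - S2) <= x2 - S2 by rewrite ler_piMl //; lra.
split => //.
- exact: q_ge2.
- apply/eqP => h; lra.
- rewrite ler_norml; apply/andP; split; lra.
Qed.


Lemma case_quot : exists C B : nat, forall n, (1 <= n)%N -> (B <= a n.+1)%N ->
  exists (p : int) (q : nat),
     [/\ (2 <= q)%N, (q <= (g1 * g2) ^ (a n))%N, th R a g1 / th R a g2 != p%:~R / q%:R &
         `|th R a g1 / th R a g2 - p%:~R / q%:R| <= C%:R * (g2%:R : R) ^- a n.+1].
Proof.
exists (4 * (g2 ^ a 1) ^ 2)%N, ((2 * g1 ^ a 1) * g2).+1 => n n1 hB.
have [hN _] := aG2 n n1.
have [A2g A2l] := AB g2 hg2 n n1.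
exists (Ag a g1 n * g2 ^ a n)%N, (Ag a g2 n * g1 ^ a n)%N.
have A2R : ((Ag a g2 n)%:R : R) != 0 by rewrite pnatr_eq0 -lt0n.
have Ey : ((Ag a g1 n * g2 ^ a n)%N%:~R / (Ag a g2 n * g1 ^ a n)%N%:R : R)
    = Sg R a g1 n / Sg R a g2 n.
  rewrite (SA g1 hg1 n n1) (SA g2 hg2 n n1) -pmulrn !natrM !natrX.
  by field; rewrite nz1 nz2 A2R.
rewrite Ey.
have /andP[t1l t1u] := TB g1 hg1 n n1.
have /andP[t2l t2u] := TB g2 hg2 n n1.
have el := e_le (a n.+1).
have elt := e_lt (a n.+1) (2 * g1 ^ a 1) hB.
have w2 := WGT g2 hg2 n.+1.
have w1 := WGT g1 hg1 n.+1.
have s1 := SGE g1 n n1. have s1' := WGT g1 hg1 1.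
have th2 := TH1 g2 hg2. have th1 := TH1 g1 hg1.
have s1t := STH g1 hg1 n n1. have s2t := STH g2 hg2 n n1.
have s2 := SGE g2 n n1. have s2' := WGT g2 hg2 1.
have G1 : (g1%:R : R) ^- a 1 * (g1%:R : R) ^+ a 1 = 1 by rewrite mulVf.
have G2 : (g2%:R : R) ^- a 1 * (g2%:R : R) ^+ a 1 = 1 by rewrite mulVf.
have G1p : 0 < (g1%:R : R) ^+ a 1 by rewrite exprn_gt0 // ltr0n ltnW.
have G2p : 0 < (g2%:R : R) ^+ a 1 by rewrite exprn_gt0 // ltr0n ltnW.
move: elt; rewrite natrM natrX => elt.
rewrite natrM natrX natrX.
set x1 := th R a g1 in t1l t1u th1 s1t *. set x2 := th R a g2 in t2l t2u th2 s2t *.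
set S1 := Sg R a g1 n in t1l t1u s1 s1t *. set S2 := Sg R a g2 n in t2l t2u s2 s2t *.
set e1 := (g1%:R : R) ^- a n.+1 in t1l t1u el elt w1 *.
set e2 := (g2%:R : R) ^- a n.+1 in t2l t2u el elt w2 *.
set c1 := (g1%:R : R) ^- a 1 in s1 s1' G1 *.
set c2 := (g2%:R : R) ^- a 1 in s2 s2' G2 *.
set H1 := (g1%:R : R) ^+ a 1 in G1 G1p elt *.
set H2 := (g2%:R : R) ^+ a 1 in G2 G2p *.
have x2p : 0 < x2 by lra.
have S2p : 0 < S2 by lra.
have E : x1 / x2 - S1 / S2 = (x1 * S2 - S1 * x2) / (x2 * S2).
  by field; rewrite !gt_eqF.
have Dp : 0 < x2 * S2 by rewrite mulr_gt0.
have num_neg : x1 * S2 - S1 * x2 < 0.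
  have h1 : (x1 - S1) * S2 <= x1 - S1 by rewrite ler_piMr //; lra.
  have h2 : c1 * (x2 - S2) <= S1 * (x2 - S2) by rewrite ler_wpM2r //; lra.
  have h3 : c1 * e2 <= c1 * (x2 - S2) by rewrite ler_wpM2l //; lra.
  have h4 : 2 * e1 < c1 * e2.
    have : 2 * e1 * H1 < c1 * e2 * H1 by rewrite -mulrA [c1 * _]mulrC -mulrA [e2 * _]mulrC mulrA G1 mul1r; lra.
    by rewrite ltr_pM2r.
  have -> : x1 * S2 - S1 * x2 = (x1 - S1) * S2 - S1 * (x2 - S2) by ring.
  lra.
have num_abs : `|x1 * S2 - S1 * x2| <= 4 * e2.
  rewrite ltr0_norm //.
  have h1 : S1 * (x2 - S2) <= x2 - S2 by rewrite ler_piMl //; lra.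
  have -> : x1 * S2 - S1 * x2 = (x1 - S1) * S2 - S1 * (x2 - S2) by ring.
  have h0 : 0 <= (x1 - S1) * S2 by rewrite mulr_ge0 //; lra.
  lra.
rewrite E; split.
- apply: leq_trans (_ : 1 * g1 ^ a n <= _)%N; last by rewrite leq_mul2r A2g orbT.
  rewrite mul1n; apply: leq_trans hg1 _; rewrite -{1}(expn1 g1) leq_exp2l //; exact: ltnW hN.
- by rewrite expnMn mulnC leq_mul2l A2l orbT.
- apply/eqP => h; have : x1 / x2 - S1 / S2 = 0 by rewrite h subrr.
  by rewrite E => /eqP; rewrite mulf_eq0 invr_eq0 => /orP[] /eqP; lra.
- rewrite normrM normfV (gtr0_norm Dp).
  rewrite ler_pdivrMr //.
  apply: le_trans num_abs _.
  have Dc : c2 * c2 <= x2 * S2.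
    by apply: ler_pM; lra.
  have K : 4 * e2 = 4 * e2 * (H2 * H2) * (c2 * c2).
    have -> : 4 * e2 * (H2 * H2) * (c2 * c2) = 4 * e2 * ((c2 * H2) * (c2 * H2)) by ring.
    by rewrite G2 !mulr1.
  rewrite [X in X <= _]K.
  have -> : 4 * H2 ^+ 2 * e2 * (x2 * S2) = 4 * e2 * (H2 * H2) * (x2 * S2) by ring.
  rewrite ler_wpM2l //.
  by rewrite !mulr_ge0 // ltW.
Qed.

End SerE.

Theorem theorem1 (R : realType) (g1 g2 : nat) (beta : R) (a : nat -> nat) :
  (2 <= g2)%N -> (g2 < g1)%N -> 0 < beta ->
  (forall n, (1 <= n)%N -> (0 < a n)%N) ->
  (2 <= a 1)%N ->
  (forall n, (1 <= n)%N -> ((a n.+1)%:R : R) = (a n)%:R `^ (1 + beta)) ->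
  let theta1 : R := \big[+%R/0%R]_(1 <= n <oo) ((g1%:R : R) ^- a n) in
  let theta2 : R := \big[+%R/0%R]_(1 <= n <oo) ((g2%:R : R) ^- a n) in
  [/\ transcendental (theta1 + theta2), transcendental (theta1 - theta2),
      transcendental (theta1 * theta2) & transcendental (theta1 / theta2)].
Proof.
move=> hg2 hg hb _ ha1 hrec theta1 theta2; split.
- exact: (crit R beta a hb ha1 hrec _ g1 g2 hg2 (case_sum R beta a hb ha1 hrec g1 g2 hg2 hg)).
- exact: (crit R beta a hb ha1 hrec _ g1 g2 hg2 (case_diff R beta a hb ha1 hrec g1 g2 hg2 hg)).
- exact: (crit R beta a hb ha1 hrec _ g1 g2 hg2 (case_prod R beta a hb ha1 hrec g1 g2 hg2 hg)).
- exact: (crit R beta a hb ha1 hrec _ g1 g2 hg2 (case_quot R beta a hb ha1 hrec g1 g2 hg2 hg)).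
Qed.
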